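(* Let $a>0$ and $n,k$ be integers with $1\le k\le n/2$, and put $u_0=a/k$. Let $a_0,\dots,a_n$ be integers. (A) Suppose there is a prime $p\ge k+2$ with $p\mid\prod_{i=1}^{k}(a+n-k+i)$, $p\nmid a_0a_n$, and $p\nmid\prod_{i=1}^{k}(a+i)$, and suppose that either $p\ge\min(2u_0,\,k+u_0)$, or ($p>2k$ and $p^2-p\ge a$). Then $f_{n,a}(x)$ has no factor of degree $k$ in $\mathbb{Q}[x]$. (B) Suppose there is a prime $p\ge k+2$ with $p\mid\prod_{i=1}^{k}(n-k+i)(a+n-k+i)$ and $p\nmid\prod_{i=1}^{k}(a+i)$, and suppose that either $p\ge\min(2u_0,\,k+u_0)$, or ($p>2k$ and $p^2-p\ge a$). Then $L_n^{(a)}(x)$ has no factor of degree $k$ in $\mathbb{Q}[x]$.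
   Context: Here $a$ is an integer. For integers $n\ge 1$, $a\ge 0$ and integers $a_0,\dots,a_n$, $f_{n,a}(x)=\sum_{j=0}^{n} a_j\frac{x^j}{(j+a)!}$. The generalised Laguerre polynomial is $L_n^{(\alpha)}(x)=\sum_{j=0}^{n}\frac{(n+\alpha)(n-1+\alpha)\cdots(j+1+\alpha)}{(n-j)!\,j!}(-x)^j$. *)

(* Defs.v *)
From HB Require Import structures.
From mathcomp Require Import all_boot all_order all_algebra.
Set Implicit Arguments. Unset Strict Implicit. Unset Printing Implicit Defensive.
Import Order.TTheory GRing.Theory Num.Theory.
Local Open Scope ring_scope.

Definition fna (n a : nat) (c : nat -> int) : {poly rat} :=
  \poly_(j < n.+1) ((c j)%:~R / ((j + a)`!)%:R).

Definition laguerre (n a : nat) : {poly rat} :=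
  \poly_(j < n.+1)
    ((-1) ^+ j * (\prod_(j.+1 <= i < n.+1) ((i + a)%N)%:R)
       / (((n - j)`! * j`!)%N)%:R).

Definition has_factor_of_degree (P : {poly rat}) (k : nat) : Prop :=
  exists g : {poly rat}, size g = k.+1 /\ (g %| P).

(* Main.v *)
Require Import Defs.
From HB Require Import structures.
From mathcomp Require Import all_boot all_order all_algebra.
From mathcomp Require Import zify ring lra.
Import Order.TTheory GRing.Theory Num.Theory.

Section Val.
Local Open Scope ring_scope.

Definition vz (p : nat) (z : int) : int := (logn p `|z|%N)%:Z.
Definition vq (p : nat) (x : rat) : int := vz p (numq x) - vz p (denq x).

Lemma vz_ge0 p z : 0 <= vz p z. Proof. by []. Qed.

Lemma vzM p z w : z != 0 -> w != 0 -> vz p (z * w) = vz p z + vz p w.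
Proof.
move=> hz hw; rewrite /vz abszM lognM ?absz_gt0 //.
Qed.

Lemma vz1 p : vz p 1 = 0. Proof. by rewrite /vz /= logn1. Qed.

Lemma vzN p z : vz p (- z) = vz p z. Proof. by rewrite /vz abszN. Qed.

Lemma vzD_nat p (m : nat) (z w : int) : prime p -> z + w != 0 ->
  (m <= logn p (absz z))%N -> (m <= logn p (absz w))%N -> (m <= logn p (absz (z + w)%R))%N.
Proof.
move=> pr hzw hz hw.
have dz : (p ^ m %| `|z|)%N.
  by apply: dvdn_trans (pfactor_dvdnn p _); rewrite dvdn_exp2l.
have dw : (p ^ m %| `|w|)%N.
  by apply: dvdn_trans (pfactor_dvdnn p _); rewrite dvdn_exp2l.
have : ((p ^ m)%:Z %| z + w)%Z by apply: rpredD.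
by rewrite -pfactor_dvdn // absz_gt0.
Qed.

Lemma vq_frac p (N D : int) : N != 0 -> D != 0 ->
  vq p (N%:~R / D%:~R) = vz p N - vz p D.
Proof.
move=> hN hD; set x := _ / _.
have hx : x != 0 by rewrite mulf_eq0 invr_eq0 !intr_eq0 negb_or hN hD.
have e : numq x * D = N * denq x.
  apply: (@intr_inj rat); rewrite !rmorphM /= numqE /x.
  by field; rewrite intr_eq0.
have := congr1 (vz p) e; rewrite !vzM ?numq_eq0 ?denq_neq0 //.
by rewrite /vq => h; lia.
Qed.

Lemma vq_numden (x : rat) : x = (numq x)%:~R / (denq x)%:~R.
Proof. by rewrite divq_num_den. Qed.

Lemma vqM p x y : x != 0 -> y != 0 -> vq p (x * y) = vq p x + vq p y.
Proof.
move=> hx hy.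
rewrite {1}(vq_numden x) {1}(vq_numden y).
have -> : (numq x)%:~R / (denq x)%:~R * ((numq y)%:~R / (denq y)%:~R) =
   (numq x * numq y)%:~R / (denq x * denq y)%:~R :> rat.
  by rewrite !rmorphM /= invfM; ring.
rewrite vq_frac ?mulf_neq0 ?numq_eq0 ?denq_neq0 // !vzM ?numq_eq0 ?denq_neq0 //.
by rewrite /vq; lia.
Qed.

Lemma vq1 p : vq p 1 = 0. Proof. by rewrite /vq /= vz1; lia. Qed.

Lemma vqV p x : x != 0 -> vq p x^-1 = - vq p x.
Proof.
move=> hx; have := @vqM p x x^-1 hx (invr_neq0 hx); rewrite mulfV // vq1; lia.
Qed.

Lemma vq_div p x y : x != 0 -> y != 0 -> vq p (x / y) = vq p x - vq p y.
Proof. by move=> hx hy; rewrite vqM ?invr_neq0 // vqV //; lia. Qed.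

Lemma vqN p x : vq p (- x) = vq p x.
Proof. by rewrite /vq numqN denqN vzN. Qed.

Lemma vq_int p z : z != 0 -> vq p z%:~R = vz p z.
Proof. by move=> _; rewrite /vq numq_int denq_int vz1; lia. Qed.

Lemma vq_nat p (m : nat) : vq p m%:R = (logn p m)%:Z.
Proof. have -> : m%:R = (m%:Z)%:~R :> rat by rewrite pmulrn. by rewrite /vq numq_int denq_int vz1 subr0. Qed.

Lemma vqD p x y (c : int) : prime p -> x != 0 -> y != 0 -> x + y != 0 ->
  c <= vq p x -> c <= vq p y -> c <= vq p (x + y).
Proof.
move=> pr hx hy hxy hcx hcy.
set nx := numq x; set dx := denq x; set ny := numq y; set dy := denq y.
have E : x + y = (nx * dy + ny * dx)%:~R / (dx * dy)%:~R :> rat.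
  rewrite {1}(vq_numden x) {1}(vq_numden y) -/nx -/dx -/ny -/dy.
  by rewrite !rmorphD !rmorphM /= invfM; field; rewrite !intr_eq0 !denq_neq0.
have hnz : nx * dy + ny * dx != 0.
  by apply: contraNneq hxy => h; rewrite E h mul0r.
have hnx : nx != 0 by rewrite numq_eq0.
have hny : ny != 0 by rewrite numq_eq0.
have hdx : dx != 0 by rewrite denq_neq0.
have hdy : dy != 0 by rewrite denq_neq0.
rewrite E vq_frac ?mulf_neq0 // vzM //.
move: hcx hcy; rewrite /vq -/nx -/dx -/ny -/dy => hcx hcy.
have h1 := vzM p nx dy hnx hdy; have h2 := vzM p ny dx hny hdx.
case: (lerP (c + vz p dx + vz p dy) 0) => hc.
  have := vz_ge0 p (nx * dy + ny * dx); lia.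
have [m hm] : exists m : nat, c + vz p dx + vz p dy = m%:Z.
  exists (absz (c + vz p dx + vz p dy)); rewrite gez0_abs //; lia.
have : (m <= logn p (absz (nx * dy + ny * dx)%R))%N.
  apply: vzD_nat => //.
    have : (m%:Z <= vz p (nx * dy)) by lia.
    by rewrite /vz lez_nat.
  have : (m%:Z <= vz p (ny * dx)) by lia.
  by rewrite /vz lez_nat.
rewrite -lez_nat -/(vz p _) => h; lia.
Qed.


Lemma vq_sum_gt p (x : rat) (I : Type) (r : seq I) (P : pred I) (F : I -> rat) :
  prime p -> x != 0 -> (forall i, P i -> F i != 0 -> vq p x < vq p (F i)) ->
  (\sum_(i <- r | P i) F i == 0) || (vq p x < vq p (\sum_(i <- r | P i) F i)).
Proof.
move=> pr hx hF.
apply: (big_rec (fun s => (s == 0) || (vq p x < vq p s))); first by rewrite eqxx.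
move=> i s Pi /orP [/eqP -> | hs] /=.
  rewrite addr0; case: (F i =P 0) => [-> | /eqP hi]; first by [].
  by rewrite hF.
case: (F i =P 0) => [-> | /eqP hi]; first by rewrite add0r hs orbT.
case: (s =P 0) => [-> | /eqP hs0]; first by rewrite addr0 (hF i Pi hi) orbT.
case: (F i + s =P 0) => [-> | /eqP his]; first by [].
apply/orP; right; rewrite -lezD1; apply: (@vqD p (F i) s _ pr hi hs0 his); rewrite lezD1 //.
by apply: hF.
Qed.

Lemma vq_dom p (x y : rat) : prime p -> x != 0 -> (y == 0) || (vq p x < vq p y) ->
  (x + y != 0) /\ vq p (x + y) = vq p x.
Proof.
move=> pr hx /orP [/eqP -> | hy]; first by rewrite addr0.
case: (y =P 0) => [-> | /eqP y0]; first by rewrite addr0.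
have hxy : x + y != 0.
  apply: contraTneq hy => h.
  have -> : y = - x by apply/eqP; rewrite -subr_eq0 opprK addrC h.
  by rewrite vqN ltxx.
split => //.
have h1 : vq p x <= vq p (x + y) by apply: vqD => //; exact: ltW.
apply/eqP; rewrite eq_le h1 andbT.
rewrite leNgt; apply/negP => h2.
have : vq p x + 1 <= vq p ((x + y) + - y).
  apply: vqD => //; rewrite ?oppr_eq0 // ?addrK ?vqN ?lezD1 //.
by rewrite addrK; lia.
Qed.


Lemma coef_nz_lt (P : {poly rat}) i : P`_i != 0 -> (i < size P)%N.
Proof. by apply: contraNT; rewrite -leqNgt => h; rewrite nth_default. Qed.
Arguments coef_nz_lt {P i}.

Lemma ex_lexmin (N : nat) (P : nat -> bool) (f : nat -> int) :
  (exists i, (i < N)%N && P i) ->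
  exists i, [/\ (i < N)%N, P i & forall j, (j < N)%N -> P j ->
     (f i <= f j) && ((f j == f i) ==> (i <= j)%N)].
Proof.
elim: N => [[i]|N IH [i0 /andP [hi0 Pi0]]] //.
have [hP|hnP] := boolP [exists i : 'I_N, P i].
- have [i [hiN Pi hmin]] : exists i, [/\ (i < N)%N, P i & forall j, (j < N)%N -> P j ->
     (f i <= f j) && ((f j == f i) ==> (i <= j)%N)].
    by apply: IH; case/existsP: hP => i Pi; exists i; rewrite ltn_ord.
  case: (boolP (P N)) => PN; last first.
    exists i; split => //; first by rewrite ltnS ltnW.
    move=> j; rewrite ltnS leq_eqVlt => /orP [/eqP -> |]; first by rewrite (negbTE PN).
    exact: hmin.
  case: (lerP (f i) (f N)) => hiN'.
    exists i; split => //; first by rewrite ltnS ltnW.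
    move=> j; rewrite ltnS leq_eqVlt => /orP [/eqP -> _ |]; last exact: hmin.
    by rewrite hiN' /= (ltnW hiN) implybT.
  exists N; split => //.
  move=> j; rewrite ltnS leq_eqVlt => /orP [/eqP -> _ |hj Pj]; first by rewrite lexx leqnn implybT.
  have /andP [h1 _] := hmin j hj Pj.
  have h2 : f N < f j by apply: lt_le_trans h1.
  by rewrite (ltW h2) /= (gt_eqF h2).
- exists N; split.
  + by [].
  + have : i0 = N.
      apply/eqP; move: hi0; rewrite ltnS leq_eqVlt => /orP [//|hlt].
      by move/existsPn: hnP => /(_ (Ordinal hlt)) /=; rewrite Pi0.
    by move=> <-.
  + move=> j; rewrite ltnS leq_eqVlt => /orP [/eqP -> _ |hj Pj]; first by rewrite lexx leqnn implybT.
    by move/existsPn: hnP => /(_ (Ordinal hj)) /=; rewrite Pj.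
Qed.


Lemma wmin p (G H : {poly rat}) (t s : int) : prime p -> 0 < t -> G != 0 -> H != 0 ->
 exists i0 j0, [/\ G`_i0 != 0, H`_j0 != 0,
   (forall i, G`_i != 0 -> t * vq p G`_i0 + s * i0%:Z <= t * vq p G`_i + s * i%:Z),
   (forall j, H`_j != 0 -> t * vq p H`_j0 + s * j0%:Z <= t * vq p H`_j + s * j%:Z)
   & ((G * H)`_(i0 + j0) != 0 /\ vq p (G * H)`_(i0 + j0) = vq p G`_i0 + vq p H`_j0)].
Proof.
move=> pr ht hG hH.
pose fG := fun i : nat => t * vq p G`_i + s * i%:Z.
pose fH := fun i : nat => t * vq p H`_i + s * i%:Z.
have exG : exists i, (i < size G)%N && (G`_i != 0).
  exists (size G).-1; rewrite -lead_coefE lead_coef_eq0 hG andbT.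
  by rewrite prednK // lt0n size_poly_eq0.
have exH : exists i, (i < size H)%N && (H`_i != 0).
  exists (size H).-1; rewrite -lead_coefE lead_coef_eq0 hH andbT.
  by rewrite prednK // lt0n size_poly_eq0.
have [i0 [_ Gi0 minG]] := @ex_lexmin _ _ fG exG.
have [j0 [_ Hj0 minH]] := @ex_lexmin _ _ fH exH.
have mG : forall i, G`_i != 0 -> (fG i0 <= fG i) && ((fG i == fG i0) ==> (i0 <= i)%N).
  by move=> i Gi; apply: minG => //; apply: coef_nz_lt.
have mH : forall i, H`_i != 0 -> (fH j0 <= fH i) && ((fH i == fH j0) ==> (j0 <= i)%N).
  by move=> i Hi; apply: minH => //; apply: coef_nz_lt.
exists i0, j0; split => //.
- by move=> i /mG /andP [].
- by move=> i /mH /andP [].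
have hx : G`_i0 * H`_j0 != 0 by rewrite mulf_neq0.
have hi0 : (i0 < (i0 + j0).+1)%N by rewrite ltnS leq_addr.
rewrite coefM (bigD1 (Ordinal hi0)) //= addKn.
set S := \sum_(_ < _ | _) _.
suff hS : (S == 0) || (vq p (G`_i0 * H`_j0) < vq p S).
  by have [hne hv] := @vq_dom p _ S pr hx hS; rewrite hv vqM.
apply: vq_sum_gt => // j hj; rewrite mulf_eq0 negb_or => /andP [Gj Hk].
rewrite vqM //.
have hjle : (j <= i0 + j0)%N by rewrite -ltnS ltn_ord.
set k := (i0 + j0 - j)%N in Hk *.
have ejk : (j + k = i0 + j0)%N by rewrite /k subnKC.
have /andP [g1 g2] := mG j Gj.
have /andP [h1 h2] := mH k Hk.
have key : fG i0 + fH j0 < fG j + fH k.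
  have hjne : j != i0 :> nat by apply: contraNneq hj => e; apply/eqP/val_inj.
  case: (ltngtP j i0) hjne => // hlt _.
  - have hne : fG j != fG i0.
      by apply: contraTneq hlt => e; move: g2; rewrite e eqxx /= => h; rewrite -leqNgt.
    have hlt2 : fG i0 < fG j by rewrite lt_neqAle eq_sym hne g1.
    by apply: ltr_leD.
  - have hk : (k < j0)%N by move: ejk hlt; lia.
    have hne : fH k != fH j0.
      by apply: contraTneq hk => e; move: h2; rewrite e eqxx /= => h; rewrite -leqNgt.
    have hlt2 : fH j0 < fH k by rewrite lt_neqAle eq_sym hne h1.
    by apply: ler_ltD.
move: key; rewrite /fG /fH.
have e2 : s * i0%:Z + s * j0%:Z = s * j%:Z + s * k%:Z.
  by rewrite -!mulrDr -!PoszD ejk.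
rewrite [vq p (G`_j * _)]vqM //.
move: (vq p G`_i0) (vq p H`_j0) (vq p G`_j) (vq p H`_k) => A B C D hkey.
have : t * (A + B) < t * (C + D) by rewrite !mulrDr; lia.
by rewrite ltr_pM2l.
Qed.


End Val.
Arguments coef_nz_lt {P i}.

Section CoreSec.
Local Open Scope ring_scope.

Lemma argI (A B C D E T S : int) (i0 j0 k : nat) :
  T * (A + D) <= T * (C + E) + S * (i0 + j0)%N%:Z ->
  T * E + S * j0%:Z <= T * D + S * 0%N%:Z ->
  T * C + S * i0%:Z <= T * B + S * k%:Z ->
  T * (A - B) <= S * k%:Z.
Proof. move=> h1 h2 h3. rewrite PoszD in h1. lia. Qed.

Lemma argI2 (A B : int) (k n : nat) : (0 < k)%N -> (0 < n)%N ->
  (k * n)%N%:Z * (A - B) <= (n.-1)%N%:Z * k%:Z -> A <= B.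
Proof.
move=> hk hn h; rewrite leNgt; apply/negP => hAB.
have h1 : (1 : int) <= A - B by lia.
have h2 : (k * n)%N%:Z * 1 <= (k * n)%N%:Z * (A - B) by rewrite ler_wpM2l.
move: h h2; rewrite mulr1 PoszM; case: n hn => // n _ /=.
lia.
Qed.

Lemma argII (A B C D E : int) (n l m i0 j0 : nat) :
  n%:Z * (B + D) + (n - l)%N%:Z <= n%:Z * (C + E) + (i0 + j0)%N%:Z ->
  n%:Z * E + j0%:Z <= n%:Z * D + m%:Z ->
  n%:Z * C + i0%:Z <= n%:Z * A + 0%N%:Z ->
  (l < n - m)%N -> (m <= n)%N ->
  n%:Z * (B - A) < 0.
Proof. move=> h1 h2 h3 h4 h5; move: h1; rewrite PoszD. lia. Qed.

Lemma argII2 (A B : int) (n : nat) : A <= B -> n%:Z * (B - A) < 0 -> False.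
Proof.
move=> h1 h2; have : 0 <= n%:Z * (B - A) by apply: mulr_ge0; lia.
lia.
Qed.

Lemma c1_der (P0 Pi : int) (k n j : nat) : (0 < j)%N -> (j <= n)%N ->
  k%:Z * (P0 - Pi) < j%:Z ->
  (k * n)%N%:Z * P0 <= (k * n)%N%:Z * Pi + (n.-1)%N%:Z * j%:Z.
Proof.
move=> hj hjn h.
have h1 : k%:Z * (P0 - Pi) <= j%:Z - 1 by lia.
have h2 : n%:Z * (k%:Z * (P0 - Pi)) <= n%:Z * (j%:Z - 1) by rewrite ler_wpM2l.
move: h2; rewrite PoszM; case: n hjn => [|n] hjn /=; first by move: hj hjn; lia.
lia.
Qed.

Lemma c2_der (Pn Pi : int) (n l j : nat) :
  ((j + l < n)%N -> Pn < Pi) -> (Pn <= Pi) -> (j <= n)%N ->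
  n%:Z * Pn + (n - l)%N%:Z <= n%:Z * Pi + j%:Z.
Proof.
move=> hlt hle hjn.
have h0 : n%:Z * Pn <= n%:Z * Pi by rewrite ler_wpM2l.
case: (ltnP (j + l) n) => hz.
  have h1 : Pn + 1 <= Pi by have := hlt hz; lia.
  have h2 : n%:Z * (Pn + 1) <= n%:Z * Pi by rewrite ler_wpM2l.
  move: h2; rewrite mulrDr mulr1; lia.
lia.
Qed.

Arguments argI {A B C D E T S i0 j0 k}.
Arguments argI2 {A B k n}.
Arguments argII {A B C D E n l m i0 j0}.
Arguments argII2 {A B n}.

Lemma core p (P : {poly rat}) (n k l : nat) :
  prime p -> size P = n.+1 -> (l < k)%N -> P`_0 != 0 ->
  (forall j, (0 < j <= n)%N -> P`_j != 0 -> k%:Z * (vq p P`_0 - vq p P`_j) < j%:Z) ->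
  (forall j, (j <= n)%N -> P`_j != 0 -> vq p P`_n <= vq p P`_j) ->
  (forall j, (j + l < n)%N -> P`_j != 0 -> vq p P`_n < vq p P`_j) ->
  ~ has_factor_of_degree P k.
Proof.
move=> pr hs hlk h0 C1 C2a C2b [g [hg /dvdpP [q hP]]].
have hP0 : P != 0 by rewrite -size_poly_eq0 hs.
have hg0 : g != 0 by apply: contraNneq hP0 => e; rewrite hP e mulr0.
have hq0 : q != 0 by apply: contraNneq hP0 => e; rewrite hP e mul0r.
have hPgq : P = g * q by rewrite hP mulrC.
have hsz : size P = (size g + size q).-1 by rewrite hPgq size_mul.
have sq0 : (0 < size q)%N by rewrite lt0n size_poly_eq0.
set m := (size q).-1.
have em : (n = k + m)%N by move: hsz; rewrite hs hg /m; lia.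
have e0 : P`_0 = g`_0 * q`_0 by rewrite hPgq coef0M.
have en : P`_n = g`_k * q`_m.
  have := lead_coefM g q; rewrite -hPgq !lead_coefE hs hg /=.
  by [].
have g0 : g`_0 != 0 by apply: contraNneq h0 => e; rewrite e0 e mul0r.
have q0 : q`_0 != 0 by apply: contraNneq h0 => e; rewrite e0 e mulr0.
have gk : g`_k != 0.
  by have := hg0; rewrite -lead_coef_eq0 lead_coefE hg.
have qm : q`_m != 0.
  by have := hq0; rewrite -lead_coef_eq0 lead_coefE.
have hk0 : (0 < k)%N by move: hlk; lia.
have hn0 : (0 < n)%N by move: em hk0; lia.
have I1 : vq p g`_0 <= vq p g`_k.
  have ht : (0 : int) < (k * n)%N%:Z by rewrite ltz_nat muln_gt0 hk0.
  have [i0 [j0 [Gi0 Hj0 mG mH [hne hv]]]] := @wmin p g q _ ((n.-1)%N%:Z) pr ht hg0 hq0.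
  rewrite -hPgq in hne hv.
  have hidx : (i0 + j0 <= n)%N.
    by have := coef_nz_lt hne; rewrite hs ltnS.
  have c1 : (k * n)%N%:Z * vq p P`_0 <= (k * n)%N%:Z * vq p P`_(i0 + j0)
               + (n.-1)%:Z * (i0 + j0)%N%:Z.
    case: (posnP (i0 + j0)) => hz.
      by rewrite hz mulr0 addr0 lexx.
    apply: c1_der => //.
    by apply: C1 => //; rewrite hz hidx.
  have m1 := mH 0%N q0.
  have m2 := mG k gk.
  move: c1; rewrite e0 vqM // hv => c1.
  apply: (argI2 hk0 hn0).
  exact: argI c1 m1 m2.
have hn0' : (0 : int) < n%:Z by rewrite ltz_nat.
have [i0 [j0 [Gi0 Hj0 mG mH [hne hv]]]] := @wmin p g q _ 1 pr hn0' hg0 hq0.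
rewrite -hPgq in hne hv.
have hidx : (i0 + j0 <= n)%N.
  by have := coef_nz_lt hne; rewrite hs ltnS.
have c2 : n%:Z * vq p P`_n + (n - l)%N%:Z <= n%:Z * vq p P`_(i0 + j0) + (i0 + j0)%N%:Z.
  apply: c2_der => //; first by move=> hz; apply: C2b.
  exact: C2a.
have m1 := mH m qm.
have m2 := mG 0%N g0.
move: c2; rewrite en vqM // hv => c2.
rewrite !mul1r in m1 m2.
apply: (argII2 I1).
apply: (argII c2 m1 m2); move: em hlk; lia.
Qed.

End CoreSec.


Definition lf (p m : nat) : nat := logn p m`!.

Lemma lf0 p : lf p 0 = 0. Proof. by rewrite /lf fact0 logn1. Qed.

Lemma lfS p m : lf p m.+1 = logn p m.+1 + lf p m.
Proof. by rewrite /lf factS lognM // fact_gt0. Qed.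

Lemma lf_rec p m : prime p -> lf p m = m %/ p + lf p (m %/ p).
Proof.
move=> pr; have p0 := prime_gt0 pr.
elim: m => [|m IH]; first by rewrite div0n lf0.
rewrite lfS divnS //; case: (boolP (p %| m.+1)) => hd /=.
  rewrite add1n lfS IH.
  have e : m.+1 = p * (m.+1 %/ p) by rewrite mulnC divnK.
  have hq : (0 < m.+1 %/ p) by rewrite divn_gt0 // dvdn_leq.
  have -> : logn p m.+1 = (logn p (m.+1 %/ p)).+1.
    by rewrite {1}e lognM // logn_prime // eqxx.
  have -> : (m.+1 %/ p) = (m %/ p).+1.
    by rewrite divnS // hd.
  lia.
rewrite add0n IH logn_coprime //; first by rewrite prime_coprime.
Qed.

Lemma lf_small p m : prime p -> (m < p)%N -> lf p m = 0.
Proof. by move=> pr h; rewrite lf_rec // divn_small // lf0. Qed.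

Lemma lf_bound p M : prime p -> (0 < M)%N -> ((p - 1) * lf p M <= M - 1)%N.
Proof.
move=> pr; have p1 := prime_gt1 pr.
elim: M {-2}M (leqnn M) => [|N IH] M hM hM0; first by move: hM hM0; lia.
rewrite lf_rec //.
case: (posnP (M %/ p)) => hq.
  by rewrite hq lf0; lia.
have hlt : (M %/ p <= N)%N.
  have : (M %/ p < M)%N by rewrite ltn_Pdiv.
  by move: hM; lia.
have := IH _ hlt hq.
have := leq_divM M p.
nia.
Qed.

Lemma lf_mono p m m' : (m <= m')%N -> (lf p m <= lf p m')%N.
Proof.
move=> h; rewrite /lf; apply: dvdn_leq_log; first exact: fact_gt0.
by rewrite (fact_split h) dvdn_mulr.
Qed.

Lemma lf_step p x y : prime p -> (p %| x)%N -> (y < x)%N -> (lf p y < lf p x)%N.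
Proof.
move=> pr hx hyx.
case: x hx hyx => // x hx hyx.
rewrite lfS.
have : (0 < logn p x.+1)%N by rewrite -pfactor_dvdn // expn1.
have := @lf_mono p y x; rewrite -ltnS in hyx; move/(_ hyx).
lia.
Qed.


Lemma B1a p k Q r : (k + 2 <= p)%N -> (r + k < p)%N -> (2 * Q <= k)%N ->
  (Q + r <= (p - Q) * (p - k - 1))%N.
Proof.
move=> h1 h2 h3.
set s := (p - k - 1)%N.
have hs : (1 <= s)%N by rewrite /s; lia.
have e : ((p - Q) * s = (p - Q - 1) * s + s)%N.
  have : (1 <= p - Q)%N by lia.
  case: (p - Q)%N => // x _; rewrite mulSn; lia.
have : ((p - Q - 1) * 1 <= (p - Q - 1) * s)%N by rewrite leq_mul2l hs orbT.
lia.
Qed.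

Lemma B1b p k Q r : (0 < k)%N -> (k + 2 <= p)%N -> (r + k < p)%N -> (Q * p <= k * (p - k))%N ->
  (Q + r <= (p - Q) * (p - k - 1))%N.
Proof.
move=> h0 h1 h2 h3.
set s := (p - k - 1)%N.
have ep : (p = k + s + 1)%N by rewrite /s; lia.
have hs1 : (1 <= s)%N by rewrite /s; lia.
case: (leqP k 1) => hk.
  have hQ : (Q = 0)%N.
    case: Q h3 => // Q h3.
    have : (k * (p - k) <= 1 * (p - k))%N by rewrite leq_mul2r hk orbT.
    move: h3; rewrite mulSn; move: (Q * p)%N (k * (p - k))%N => X Y; move: h0 hk; lia.
  rewrite hQ subn0 add0n.
  have : (p * 1 <= p * s)%N by rewrite leq_mul2l hs1 orbT.
  by rewrite muln1 /s; lia.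
have h4 : (Q * p * (s + 1) <= k * (s + 1) * (s + 1))%N.
  rewrite leq_mul2r; apply/orP; right; move: h3; rewrite {2}ep.
  by have -> : (k + s + 1 - k = s + 1)%N by lia.
have h5 : (k * (s + 1) * (s + 1) <= p * ((p - 1) * s))%N.
  rewrite ep; have -> : (k + s + 1 - 1 = k + s)%N by lia.
  have eL : (k * (s + 1) * (s + 1) = k * s * s + 2 * (k * s) + k)%N by ring.
  have eR : ((k + s + 1) * ((k + s) * s) = k * (k * s) + 2 * (k * s * s) + s * s * s + k * s + s * s)%N by ring.
  rewrite eL eR.
  have f1 : (2 * (k * s) <= k * (k * s))%N by rewrite leq_mul2r; apply/orP; right; lia.
  have f2 : (k * 1 <= k * s)%N by rewrite leq_mul2l hs1 orbT.
  move: f1 f2; rewrite muln1.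
  move: (k * (k * s))%N (k * s * s)%N (s * s * s)%N (k * s)%N (s * s)%N => B C D A E.
  lia.
have h6 : (Q * (s + 1) <= (p - 1) * s)%N.
  have : (p * (Q * (s + 1)) <= p * ((p - 1) * s))%N.
    have -> : (p * (Q * (s + 1)) = Q * p * (s + 1))%N by ring.
    exact: leq_trans h4 h5.
  by rewrite leq_pmul2l //; lia.
have hQp : (Q <= p)%N.
  have f7 : ((p - 1) * s <= p * (s + 1))%N by apply: leq_mul; lia.
  have : (Q * (s + 1) <= p * (s + 1))%N by exact: leq_trans h6 f7.
  by rewrite leq_mul2r; case/orP => //; lia.
have e : ((p - Q) * s + Q * s = p * s)%N by rewrite -mulnDl subnK.
have e2 : ((p - 1) * s + s = p * s)%N by rewrite -{2}(mul1n s) -mulnDl subnK //; lia.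
move: e e2 h6 h2; rewrite mulnDr muln1.
move: ((p - Q) * s)%N (Q * s)%N (p * s)%N ((p - 1) * s)%N => X Y Z W.
lia.
Qed.


Lemma B2 p k Q r d : (2 * k < p)%N -> (r + k < p)%N -> (Q < p)%N ->
  (Q = p - 1 -> r = 0)%N -> (p <= Q + d)%N ->
  (Q + d + 2 * r <= 2 * d * (p - k))%N.
Proof.
move=> h1 h2 h3 h4 h5.
have hd : (1 <= d)%N by lia.
set u := (p - k)%N.
have e : (2 * d * u = d * (2 * u))%N by rewrite mulnCA mulnA.
rewrite e.
case: (ltnP Q (p - 1)) => hQ.
  have hd2 : (2 <= d)%N by lia.
  have : (2 * (2 * u) <= d * (2 * u))%N by rewrite leq_mul2r hd2 orbT.
  have : (d * (2 * u) = d + d * (2 * u - 1))%N.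
    have : (1 <= 2 * u)%N by rewrite /u; lia.
    case: (2 * u)%N => // x _; rewrite mulnS; lia.
  have : (2 * (2 * u - 1) <= d * (2 * u - 1))%N by rewrite leq_mul2r hd2 orbT.
  rewrite /u; lia.
have hr : r = 0%N by apply: h4; lia.
have : (d * (2 * u) = d + d * (2 * u - 1))%N.
  have : (1 <= 2 * u)%N by rewrite /u; lia.
  case: (2 * u)%N => // x _; rewrite mulnS; lia.
have : (1 * (2 * u - 1) <= d * (2 * u - 1))%N by rewrite leq_mul2r hd orbT.
rewrite /u; lia.
Qed.



Lemma subKmul x y c : (y <= x)%N -> ((x - y) * c + y * c = x * c)%N.
Proof. by move=> h; rewrite -mulnDl subnK. Qed.

Lemma NT p a k : prime p -> (0 < k)%N -> (k + 2 <= p)%N ->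
  (forall i, (0 < i <= k)%N -> ~~ (p %| a + i)%N) ->
  ((2 * a <= k * p)%N \/ (k * k + a <= k * p)%N) \/ ((2 * k < p)%N /\ (a <= p ^ 2 - p)%N) ->
  forall j, (0 < j)%N -> (k * (lf p (a + j) - lf p a) < j)%N.
Proof.
move=> pr hk hkp hnd hyp j hj.
have p0 := prime_gt0 pr.
set Q := (a %/ p)%N; set r := (a %% p)%N.
have ea : (a = Q * p + r)%N by rewrite /Q /r -divn_eq.
have hr : (r < p)%N by rewrite ltn_pmod.
have hrk : (r + k < p)%N.
  rewrite ltnNge; apply/negP => h.
  have := hnd (p - r)%N; rewrite subn_gt0 hr /= => /(_ ltac:(lia)).
  have -> : (a + (p - r) = (Q + 1) * p)%N by rewrite ea mulnDl mul1n; lia.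
  by rewrite dvdn_mull.
have hap : (a <= p * p - p)%N.
  case: hyp => [[h|h]|[_ h]].
  - have : (k * p <= (p - 2) * p)%N by rewrite leq_mul2r; apply/orP; right; lia.
    have := @subKmul p 2 p ltac:(lia).
    lia.
  - have : (k * p <= (p - 1) * p)%N by rewrite leq_mul2r; apply/orP; right; lia.
    have := @subKmul p 1 p ltac:(lia); rewrite mul1n.
    have : (1 <= k * k)%N by rewrite muln_gt0 hk.
    lia.
  - by move: h; rewrite expnS expn1.
have hQ : (Q < p)%N.
  rewrite /Q ltn_divLR //; have : (p <= p * p)%N by rewrite leq_pmull.
  lia.
have lfa : lf p a = Q by rewrite lf_rec // -/Q (@lf_small p Q pr hQ) addn0.
set M := ((a + j) %/ p)%N.
have lfaj : lf p (a + j) = (M + lf p M)%N by rewrite lf_rec.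
have hMp : (M * p <= a + j)%N by rewrite /M leq_divM.
have hQM : (Q <= M)%N by rewrite /Q /M leq_div2r // leq_addr.
rewrite lfa lfaj.
case: (ltnP Q M) => hQM2; last first.
  have eM : M = Q by apply/eqP; rewrite eqn_leq hQM hQM2.
  by rewrite eM (@lf_small p Q pr hQ) addn0 subnn muln0.
set d := (M - Q)%N.
have eM : (M = Q + d)%N by rewrite /d subnKC.
have hd : (0 < d)%N by rewrite /d subn_gt0.
have hjd : (d * p <= j + r)%N.
  move: hMp; rewrite eM mulnDl ea; lia.
have edp : (d * p = d * k + d * (p - k))%N by rewrite -mulnDr subnKC //; lia.
have -> : (M + lf p M - Q = d + lf p M)%N by move: eM; lia.
case: (ltnP M p) => hMp2.
  rewrite lf_small // addn0.
  have : (1 * (p - k) <= d * (p - k))%N by rewrite leq_mul2r hd orbT.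
  rewrite (mulnC k d) mul1n.
  move: hjd edp hrk; move: (d * p)%N (d * k)%N (d * (p - k))%N => X Y Z.
  lia.
have hb := @lf_bound p M pr ltac:(lia).
set L := lf p M in hb *.
have hdQ : (p - Q <= d)%N by lia.
case: hyp => [hyp1|[h2k hap2]].
  have hB : (Q + r <= (p - Q) * (p - k - 1))%N.
    case: hyp1 => h.
      apply: B1a => //.
      have : (2 * Q * p <= k * p)%N.
        by rewrite -mulnA; move: h; rewrite ea; move: (Q * p)%N (k * p)%N => X Y; lia.
      by rewrite leq_mul2r; case/orP => //; lia.
    apply: B1b => //.
    have : (Q * p <= a)%N by rewrite ea leq_addr.
    rewrite mulnBr; lia.
  have h1 : ((p - Q) * (p - k - 1) <= d * (p - k - 1))%N by rewrite leq_mul2r hdQ orbT.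
  have h2 : (d * (p - k) = d * (p - k - 1) + d)%N.
    by rewrite -{3}(muln1 d) -mulnDr subnK //; lia.
  have h3 : (k * L <= (p - 1) * L)%N by rewrite leq_mul2r; apply/orP; right; lia.
  move: hjd edp h1 h2 h3 hb hB; rewrite mulnDr (mulnC k d).
  move: (d * p)%N (d * k)%N (d * (p - k))%N (d * (p - k - 1))%N ((p - Q) * (p - k - 1))%N.
  move=> X Y Z W V.
  move: (k * L)%N ((p - 1) * L)%N => A B.
  lia.
have hB := @B2 p k Q r d h2k hrk hQ.
have hB' : (Q + d + 2 * r <= 2 * d * (p - k))%N.
  apply: hB; last lia.
  move=> eQ; move: hap2; rewrite ea eQ expnS expn1.
  have := @subKmul p 1 p ltac:(lia); rewrite mul1n.
  lia.
have h3 : (2 * k * L <= (p - 1) * L)%N by rewrite leq_mul2r; apply/orP; right; lia.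
move: hjd edp h3 hb hB'; rewrite mulnDr (mulnC k d) -mulnA -(mulnA 2 d).
move: (d * p)%N (d * k)%N (d * (p - k))%N (k * L)%N ((p - 1) * L)%N => X Y Z A B.
lia.
Qed.


Section Asm.
Local Open Scope ring_scope.

Lemma dvd_prod_iff p (F : nat -> nat) k : prime p ->
  reflect (exists2 i, (0 < i <= k)%N & (p %| F i)%N) (p %| \prod_(1 <= i < k.+1) F i)%N.
Proof.
move=> pr; rewrite Euclid_dvd_prod // big_has.
apply: (iffP hasP) => [[i hi hF]|[i hi hF]]; exists i => //.
  by move: hi; rewrite mem_index_iota ltnS.
by rewrite mem_index_iota ltnS.
Qed.

Lemma hyp_conv (a k p : nat) : (0 < k)%N ->
  (Num.min (2 * (a%:R / k%:R)) (k%:R + a%:R / k%:R) <= p%:R :> rat) ->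
  (2 * a <= k * p)%N \/ (k * k + a <= k * p)%N.
Proof.
move=> hk; have hk' : (0 : rat) < k%:R by rewrite ltr0n.
have hk0 : (k%:R : rat) != 0 by rewrite pnatr_eq0 -lt0n.
rewrite ge_min => /orP [h|h]; [left|right]; rewrite -(ler_nat rat).
  have e : (2 * a)%N%:R = 2 * (a%:R / k%:R) * k%:R :> rat.
    by rewrite natrM; field.
  by rewrite e natrM (mulrC k%:R) ler_pM2r.
have e : (k * k + a)%N%:R = (k%:R + a%:R / k%:R) * k%:R :> rat.
  by rewrite natrD natrM; field.
by rewrite e natrM (mulrC k%:R) ler_pM2r.
Qed.

Lemma vz_nodvd p (z : int) : prime p -> ~~ (p%:Z %| z)%Z -> vz p z = 0.
Proof.
move=> pr h; rewrite /vz logn_coprime //.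
by rewrite prime_coprime.
Qed.

Lemma lagprod n a j : (j <= n)%N ->
  ((j + a)`! * \prod_(j.+1 <= i < n.+1) (i + a) = (n + a)`!)%N.
Proof.
elim: n => [|n IH] hj.
  by move: hj; rewrite leqn0 => /eqP ->; rewrite big_geq // muln1.
case: (ltnP j n.+1) => h.
  rewrite big_nat_recr //= mulnA IH // addSn factS mulnC //.
have -> : j = n.+1 by apply/eqP; rewrite eqn_leq hj h.
by rewrite big_geq // muln1.
Qed.

Lemma vq_sign p (x : rat) j : vq p ((-1) ^+ j * x) = vq p x.
Proof. by rewrite -signr_odd mulr_sign; case: (odd j); rewrite ?vqN. Qed.

End Asm.


Section PA.
Local Open Scope ring_scope.

Lemma vq_frac_nat p (z : int) (m : nat) : z != 0 -> (0 < m)%N ->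
  vq p (z%:~R / m%:R) = vz p z - (logn p m)%:Z.
Proof.
move=> hz hm; rewrite vq_div ?vq_int ?vq_nat //; first by rewrite intr_eq0.
by rewrite pnatr_eq0 -lt0n.
Qed.

Lemma partA (a n k : nat) (c : nat -> int) (p : nat) :
  (0 < a)%N -> (1 <= k)%N -> (k.*2 <= n)%N ->
  prime p -> (k + 2 <= p)%N ->
  (p %| \prod_(1 <= i < k.+1) (a + (n - k) + i))%N ->
  ~~ (p%:Z %| (c 0%N * c n)%R)%Z ->
  ~~ (p %| \prod_(1 <= i < k.+1) (a + i))%N ->
  ((2 * a <= k * p)%N \/ (k * k + a <= k * p)%N) \/ ((2 * k < p)%N /\ (a <= p ^ 2 - p)%N) ->
  ~ has_factor_of_degree (fna n a c) k.
Proof.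
move=> ha hk hkn pr hkp hdiv hc hnd hyp.
have [i0 hi0 hpi0] : exists2 i, (0 < i <= k)%N & (p %| a + (n - k) + i)%N.
  exact/(dvd_prod_iff p (fun i => a + (n - k) + i)%N k pr).
have hnd' : forall i, (0 < i <= k)%N -> ~~ (p %| a + i)%N.
  move=> i hi; apply/negP => hpi; move/negP: hnd; apply.
  by apply/(dvd_prod_iff p (fun i => a + i)%N k pr); exists i.
have hc0 : ~~ (p%:Z %| c 0%N)%Z by apply: contra hc; apply: dvdz_mulr.
have hcn : ~~ (p%:Z %| c n)%Z by apply: contra hc; apply: dvdz_mull.
have c0nz : c 0%N != 0 by apply: contraNneq hc0 => ->; apply: dvdz0.
have cnnz : c n != 0 by apply: contraNneq hcn => ->; apply: dvdz0.
have vc0 : vz p (c 0%N) = 0 by apply: vz_nodvd.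
have vcn : vz p (c n) = 0 by apply: vz_nodvd.
set P := fna n a c.
have cf : forall j, (j <= n)%N -> P`_j = (c j)%:~R / ((j + a)`!)%:R.
  by move=> j hj; rewrite /P /fna coef_poly ltnS hj.
have vP : forall j, (j <= n)%N -> c j != 0 -> vq p P`_j = vz p (c j) - (lf p (j + a))%:Z.
  by move=> j hj hcj; rewrite cf // vq_frac_nat // fact_gt0.
have Pnz : forall j, (j <= n)%N -> P`_j != 0 -> c j != 0.
  by move=> j hj; rewrite cf //; apply: contraNneq => ->; rewrite mul0r.
have hn : (0 < n)%N by clear -hkn hk; lia.
apply: (@core p P n k (k - i0)) => //.
- apply: size_poly_eq; rewrite mulf_neq0 // ?intr_eq0 // invr_eq0 pnatr_eq0 -lt0n fact_gt0 //.
- by clear -hi0; lia.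
- by rewrite cf // mulf_neq0 // ?intr_eq0 // invr_eq0 pnatr_eq0 -lt0n fact_gt0.
- move=> j /andP [hj0 hjn] hPj.
  have hcj := Pnz j hjn hPj.
  rewrite (vP 0%N) // (vP j) // vc0 add0n.
  have hNT := @NT p a k pr hk hkp hnd' hyp j hj0.
  have hmono : (lf p a <= lf p (a + j))%N by apply: lf_mono; apply: leq_addr.
  have hV : 0 <= k%:Z * vz p (c j) by apply: mulr_ge0.
  have hm2 : (k * lf p a <= k * lf p (a + j))%N by rewrite leq_mul2l hmono orbT.
  have hNT' : (k * lf p (a + j))%N%:Z - (k * lf p a)%N%:Z < j%:Z.
    move: hNT hm2; rewrite mulnBr; move: (k * lf p a)%N (k * lf p (a + j))%N => X Y.
    clear; lia.
  rewrite (addnC j a).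
  move: hNT' hV; rewrite !PoszM.
  move: (vz p (c j)) (lf p a) (lf p (a + j)) => V A B.
  have -> : k%:Z * (0 - A%:Z - (V - B%:Z)) = k%:Z * B%:Z - k%:Z * A%:Z - k%:Z * V by ring.
  move: (k%:Z * B%:Z) (k%:Z * A%:Z) (k%:Z * V) => X Y Z.
  clear; lia.
- move=> j hjn hPj.
  have hcj := Pnz j hjn hPj.
  rewrite (vP n) // (vP j) // vcn.
  have : (lf p (j + a) <= lf p (n + a))%N by apply: lf_mono; rewrite leq_add2r.
  have := vz_ge0 p (c j).
  move: (vz p (c j)) (lf p (j + a)) (lf p (n + a)) => V X Y.
  clear; lia.
- move=> j hjl hPj.
  have hjn : (j <= n)%N by clear -hjl; lia.
  have hcj := Pnz j hjn hPj.
  rewrite (vP n) // (vP j) // vcn.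
  have h1 : (lf p (j + a) < lf p (a + (n - k) + i0))%N.
    by apply: lf_step => //; clear -hjl hi0 hkn; lia.
  have h2 : (lf p (a + (n - k) + i0) <= lf p (n + a))%N.
    by apply: lf_mono; clear -hi0 hkn; lia.
  have := vz_ge0 p (c j).
  move: h1 h2; move: (vz p (c j)) (lf p (j + a)) (lf p (n + a)) (lf p (a + (n - k) + i0)) => V X Y Z.
  clear; lia.
Qed.

End PA.


Section PB.
Local Open Scope ring_scope.

Lemma lf_binom p n j : (j <= n)%N -> (lf p (n - j) + lf p j <= lf p n)%N.
Proof.
move=> h; rewrite /lf -lognM ?fact_gt0 //.
apply: dvdn_leq_log; first exact: fact_gt0.
by rewrite -(bin_fact h) mulnC dvdn_mull.
Qed.

Lemma lf_multiple p x y : prime p -> (x + p <= y)%N -> (lf p x < lf p y)%N.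
Proof.
move=> pr h; have p0 := prime_gt0 pr.
set z := ((x %/ p).+1 * p)%N.
have h1 : (x < z)%N by rewrite /z ltn_ceil.
have h2 : (z <= y)%N.
  have : ((x %/ p) * p <= x)%N by rewrite leq_divM.
  by rewrite /z mulSn; move: h; clear; lia.
apply: leq_trans (@lf_step p z x pr _ h1) (@lf_mono p z y h2).
by rewrite /z dvdn_mull.
Qed.

Lemma partB (a n k : nat) (p : nat) :
  (0 < a)%N -> (1 <= k)%N -> (k.*2 <= n)%N ->
  prime p -> (k + 2 <= p)%N ->
  (p %| \prod_(1 <= i < k.+1) ((n - k + i) * (a + (n - k) + i)))%N ->
  ~~ (p %| \prod_(1 <= i < k.+1) (a + i))%N ->
  ((2 * a <= k * p)%N \/ (k * k + a <= k * p)%N) \/ ((2 * k < p)%N /\ (a <= p ^ 2 - p)%N) ->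
  ~ has_factor_of_degree (laguerre n a) k.
Proof.
move=> ha hk hkn pr hkp hdiv hnd hyp.
have [i0 hi0 hpi0] : exists2 i, (0 < i <= k)%N & (p %| (n - k + i) * (a + (n - k) + i))%N.
  exact/(dvd_prod_iff p (fun i => (n - k + i) * (a + (n - k) + i))%N k pr).
have hnd' : forall i, (0 < i <= k)%N -> ~~ (p %| a + i)%N.
  move=> i hi; apply/negP => hpi; move/negP: hnd; apply.
  by apply/(dvd_prod_iff p (fun i => a + i)%N k pr); exists i.
set P := laguerre n a.
pose NP j := (\prod_(j.+1 <= i < n.+1) (i + a))%N.
have NPpos : forall j, (0 < NP j)%N.
  by move=> j; rewrite /NP prodn_gt0 // => i; rewrite addn_gt0 ha orbT.
have cf : forall j, (j <= n)%N ->
    P`_j = (-1) ^+ j * ((NP j)%:R / (((n - j)`! * j`!)%N)%:R).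
  by move=> j hj; rewrite /P /laguerre coef_poly ltnS hj /NP natr_prod mulrA.
have Pnz : forall j, (j <= n)%N -> P`_j != 0.
  move=> j hj; rewrite cf // mulf_neq0 ?signr_eq0 // mulf_neq0 //.
    by rewrite pnatr_eq0 -lt0n.
  by rewrite invr_eq0 pnatr_eq0 -lt0n muln_gt0 !fact_gt0.
have vP : forall j, (j <= n)%N ->
    vq p P`_j + (lf p (j + a))%:Z + (lf p (n - j))%:Z + (lf p j)%:Z = (lf p (n + a))%:Z.
  move=> j hj; rewrite cf // vq_sign vq_div ?vq_nat; first last.
  - by rewrite pnatr_eq0 -lt0n muln_gt0 !fact_gt0.
  - by rewrite pnatr_eq0 -lt0n.
  have e1 : (lf p (j + a) + logn p (NP j))%N = lf p (n + a).
    by rewrite /lf -lognM ?fact_gt0 // lagprod.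
  have e2 : logn p ((n - j)`! * j`!) = (lf p (n - j) + lf p j)%N.
    by rewrite lognM ?fact_gt0.
  rewrite e2 -e1.
  move: (logn p (NP j)) (lf p (j + a)) (lf p (n - j)) (lf p j) => X Y Z W.
  clear; lia.
have hn : (0 < n)%N by clear -hkn hk; lia.
apply: (@core p P n k (k - i0)) => //.
- apply: size_poly_eq.
  have := Pnz n (leqnn n).
  by rewrite /P /laguerre coef_poly ltnS leqnn.
- by clear -hi0; lia.
- by apply: Pnz.
- move=> j /andP [hj0 hjn] _.
  have v0 := vP 0%N (leq0n n); have vj := vP j hjn.
  rewrite subn0 lf0 add0n in v0.
  have hNT := @NT p a k pr hk hkp hnd' hyp j hj0.
  have hmono : (lf p a <= lf p (a + j))%N by apply: lf_mono; apply: leq_addr.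
  have hb := @lf_binom p n j hjn.
  have hd : vq p P`_0 - vq p P`_j <= (lf p (a + j))%:Z - (lf p a)%:Z.
    move: v0 vj hb; rewrite (addnC j a).
    move: (vq p P`_0) (vq p P`_j) (lf p (a + j)) (lf p a) (lf p n) (lf p (n - j)) (lf p j) (lf p (n + a)).
    move=> A B C D E F G H; clear; lia.
  have hd2 : k%:Z * (vq p P`_0 - vq p P`_j) <= k%:Z * ((lf p (a + j))%:Z - (lf p a)%:Z).
    by rewrite ler_wpM2l.
  move: hNT; rewrite -ltz_nat PoszM -subzn // => hNT.
  move: hd2 hNT; move: (k%:Z * (vq p P`_0 - vq p P`_j)) (k%:Z * ((lf p (a + j))%:Z - (lf p a)%:Z)).
  move=> X Y; clear; lia.
- move=> j hjn _.
  have vn := vP n (leqnn n); have vj := vP j hjn.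
  rewrite subnn lf0 in vn.
  have hb := @lf_binom p n j hjn.
  have hm : (lf p (j + a) <= lf p (n + a))%N by apply: lf_mono; rewrite leq_add2r.
  move: vn vj hb hm.
  move: (vq p P`_n) (vq p P`_j) (lf p (j + a)) (lf p (n + a)) (lf p n) (lf p (n - j)) (lf p j).
  move=> A B C D E F G; clear; lia.
- move=> j hjl _.
  have hjn : (j <= n)%N by clear -hjl; lia.
  have vn := vP n (leqnn n); have vj := vP j hjn.
  rewrite subnn lf0 in vn.
  have hb := @lf_binom p n j hjn.
  have hm : (lf p (j + a) <= lf p (n + a))%N by apply: lf_mono; rewrite leq_add2r.
  have key : (lf p (j + a) + lf p (n - j) + lf p j < lf p (n + a) + lf p n)%N.
    move: hpi0; rewrite Euclid_dvdM // => /orP [hx|hx].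
    + have hxn : (n - k + i0 <= n)%N by clear -hi0 hkn; lia.
      have hjx : (j < n - k + i0)%N by clear -hjl hi0 hkn; lia.
      case: (leqP p (n - j)) => hpn.
        have : (lf p (j + a) < lf p (n + a))%N.
          by apply: lf_multiple => //; clear -hpn hjn; lia.
        move: hb; clear; lia.
      have h0 : lf p (n - j) = 0%N by apply: lf_small.
      have h1 : (lf p j < lf p (n - k + i0))%N by apply: lf_step.
      have h2 := @lf_mono p _ _ hxn.
      move: h0 h1 h2 hm; clear; lia.
    + have h1 : (lf p (j + a) < lf p (a + (n - k) + i0))%N.
        by apply: lf_step => //; clear -hjl hi0 hkn; lia.
      have h2 : (lf p (a + (n - k) + i0) <= lf p (n + a))%N.
        by apply: lf_mono; clear -hi0 hkn; lia.
      move: h1 h2 hb; clear; lia.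
  move: vn vj key.
  move: (vq p P`_n) (vq p P`_j) (lf p (j + a)) (lf p (n + a)) (lf p n) (lf p (n - j)) (lf p j).
  move=> A B C D E F G; clear; lia.
Qed.

End PB.


Theorem lemma1p1 (a n k : nat) (ha : (0 < a)%N) (hk1 : (1 <= k)%N)
    (hkn : (k.*2 <= n)%N) :
  let u0 : rat := (a%:R / k%:R)%R in
  (forall (c : nat -> int) (p : nat),
      prime p -> (k + 2 <= p)%N ->
      (p %| \prod_(1 <= i < k.+1) (a + (n - k) + i))%N ->
      ~~ (p%:Z %| (c 0%N * c n)%R)%Z ->
      ~~ (p %| \prod_(1 <= i < k.+1) (a + i))%N ->
      ((Num.min (2 * u0) (k%:R + u0) <= p%:R)%R
         \/ ((2 * k < p)%N /\ (a <= p ^ 2 - p)%N)) ->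
      ~ has_factor_of_degree (fna n a c) k)
  /\
  (forall p : nat,
      prime p -> (k + 2 <= p)%N ->
      (p %| \prod_(1 <= i < k.+1) ((n - k + i) * (a + (n - k) + i)))%N ->
      ~~ (p %| \prod_(1 <= i < k.+1) (a + i))%N ->
      ((Num.min (2 * u0) (k%:R + u0) <= p%:R)%R
         \/ ((2 * k < p)%N /\ (a <= p ^ 2 - p)%N)) ->
      ~ has_factor_of_degree (laguerre n a) k).
Proof.
move=> u0; split.
- move=> c p pr hkp hdiv hc hnd hyp.
  apply: (@partA a n k c p ha hk1 hkn pr hkp hdiv hc hnd).
  case: hyp => [h|h]; [left; exact: (@hyp_conv a k p hk1 h) | by right].
- move=> p pr hkp hdiv hnd hyp.
  apply: (@partB a n k p ha hk1 hkn pr hkp hdiv hnd).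
  case: hyp => [h|h]; [left; exact: (@hyp_conv a k p hk1 h) | by right].
Qed.
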